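(* Let $\mathcal{C}$ be an additive category with an automorphism $\Sigma$, let $n\ge3$, and let $\mathscr{N}$ be a collection of $n$-$\Sigma$-sequences in $\mathcal{C}$ satisfying the axioms (N1* ) and (N3). Then $\mathscr{N}$ satisfies (N2) if and only if $\mathscr{N}$ satisfies (N2* ).
   Context: $\mathcal{C}$ is an additive category, $\Sigma\colon\mathcal{C}\to\mathcal{C}$ an automorphism, $n\ge3$. An $n$-$\Sigma$-sequence $A_\bullet$ is a diagram $A_1\xrightarrow{\alpha_1}A_2\to\cdots\xrightarrow{\alpha_{n-1}}A_n\xrightarrow{\alpha_n}\Sigma A_1$. It is exact if for every object $B$ the doubly infinite sequence of abelian groups $\cdots\to\mathrm{Hom}(B,\Sigma^iA_1)\xrightarrow{(\Sigma^i\alpha_1)_*}\mathrm{Hom}(B,\Sigma^iA_2)\to\cdots\xrightarrow{(\Sigma^i\alpha_n)_*}\mathrm{Hom}(B,\Sigma^{i+1}A_1)\to\cdots$ ($i\in\mathbb{Z}$) is exact. The left rotation of $A_\bullet$ is $A_2\xrightarrow{\alpha_2}\cdots\xrightarrow{\alpha_n}\Sigma A_1\xrightarrow{(-1)^n\Sigma\alpha_1}\Sigma A_2$. A morphism $(\varphi_1,\dots,\varphi_n)\colon A_\bullet\to B_\bullet$ consists of $\varphi_i\colon A_i\to B_i$ with $\varphi_{i+1}\alpha_i=\beta_i\varphi_i$ ($1\le i\le n-1$) and $\Sigma\varphi_1\circ\alpha_n=\beta_n\varphi_n$; it is a weak isomorphism if $\varphi_i$ and $\varphi_{i+1}$ are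 isomorphisms for some $1\le i\le n$ (with $\varphi_{n+1}:=\Sigma\varphi_1$). Axioms for a collection $\mathscr{N}$: (N1* ): (a) if $A_\bullet\to B_\bullet$ is a weak isomorphism of exact $n$-$\Sigma$-sequences with $A_\bullet\in\mathscr{N}$, then $B_\bullet\in\mathscr{N}$; (b) for all objects $A$, the trivial sequence $A\xrightarrow{1}A\to0\to\cdots\to0\to\Sigma A$ is in $\mathscr{N}$; (c) every morphism $\alpha\colon A_1\to A_2$ is the first morphism of some sequence in $\mathscr{N}$. (N2): an $n$-$\Sigma$-sequence is in $\mathscr{N}$ if and only if its left rotation is in $\mathscr{N}$. (N2* ): the left rotation of every sequence in $\mathscr{N}$ is in $\mathscr{N}$. (N3): given $A_\bullet,B_\bullet\in\mathscr{N}$ and $\varphi_1\colon A_1\to B_1$, $\varphi_2\colon A_2\to B_2$ with $\varphi_2\alpha_1=\beta_1\varphi_1$, there exist $\varphi_3,\dots,\varphi_n$ making $(\varphi_1,\dots,\varphi_n)$ a morphism of $n$-$\Sigma$-sequences. *)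

(* Defs.v *)
From HB Require Import structures.
From mathcomp Require Import all_boot all_order all_algebra.
Set Implicit Arguments. Unset Strict Implicit. Unset Printing Implicit Defensive.
Import GRing.Theory.
Local Open Scope ring_scope.

Definition castHom {T : Type} (H : T -> T -> Type) (A A' B B' : T)
  (e1 : A = A') (e2 : B = B') (f : H A B) : H A' B' :=
  match e1 in _ = A1 return H A1 B' with
  | erefl => match e2 in _ = B1 return H A B1 with erefl => f end end.

Record AddCat := {
  Obj :> Type;
  Hom : Obj -> Obj -> zmodType;
  comp : forall A B D : Obj, Hom B D -> Hom A B -> Hom A D;
  idm : forall A : Obj, Hom A A;
  compA : forall A B D E (h : Hom D E) (g : Hom B D) (f : Hom A B),
      comp h (comp g f) = comp (comp h g) f;
  comp1m : forall A B (f : Hom A B), comp (idm B) f = f;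
  compm1 : forall A B (f : Hom A B), comp f (idm A) = f;
  compDl : forall A B D (g g' : Hom B D) (f : Hom A B),
      comp (g + g') f = comp g f + comp g' f;
  compDr : forall A B D (g : Hom B D) (f f' : Hom A B),
      comp g (f + f') = comp g f + comp g f';
  zobj : Obj;
  zobj_id : idm zobj = 0;
  biprod : forall A B : Obj, exists (P : Obj) (i1 : Hom A P) (i2 : Hom B P)
      (p1 : Hom P A) (p2 : Hom P B),
      [/\ comp p1 i1 = idm A, comp p2 i2 = idm B, comp p1 i2 = 0,
          comp p2 i1 = 0 & comp i1 p1 + comp i2 p2 = idm P]
}.
Arguments Hom {_}.
Arguments comp {_ _ _ _}.
Arguments idm {_}.
Arguments zobj {_}.
Arguments castHom {T} H {A A' B B'}.
Definition HomT (C : AddCat) (X Y : C) : Type := Hom X Y.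
Arguments HomT : clear implicits.

Record Autom (C : AddCat) := {
  Sg : C -> C;
  Sgh : forall A B : C, Hom A B -> Hom (Sg A) (Sg B);
  Sgh_id : forall A : C, Sgh (idm A) = idm (Sg A);
  Sgh_comp : forall (A B D : C) (g : Hom B D) (f : Hom A B),
      Sgh (comp g f) = comp (Sgh g) (Sgh f);
  Sgh_add : forall (A B : C) (f g : Hom A B), Sgh (f + g) = Sgh f + Sgh g;
  Si : C -> C;
  Sih : forall A B : C, Hom A B -> Hom (Si A) (Si B);
  Sih_id : forall A : C, Sih (idm A) = idm (Si A);
  Sih_comp : forall (A B D : C) (g : Hom B D) (f : Hom A B),
      Sih (comp g f) = comp (Sih g) (Sih f);
  Sih_add : forall (A B : C) (f g : Hom A B), Sih (f + g) = Sih f + Sih g;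
  SiSg : forall X : C, Si (Sg X) = X;
  SgSi : forall X : C, Sg (Si X) = X;
  SihSgh : forall (A B : C) (f : Hom A B),
      castHom (HomT C) (SiSg A) (SiSg B) (Sih (Sgh f)) = f;
  SghSih : forall (A B : C) (f : Hom A B),
      castHom (HomT C) (SgSi A) (SgSi B) (Sgh (Sih f)) = f
}.
Arguments Sg {_}.
Arguments Sgh {_} _ {_ _}.
Arguments Si {_}.
Arguments Sih {_} _ {_ _}.

Section Seqs.
Variables (C : AddCat) (S : Autom C).

Fixpoint SpowN (m : nat) (A B : C) (f : Hom A B) : Hom (iter m (Sg S) A) (iter m (Sg S) B) :=
  match m return Hom (iter m (Sg S) A) (iter m (Sg S) B) with
  | 0 => f | m'.+1 => Sgh S (SpowN m' f) end.
Fixpoint SinvN (m : nat) (A B : C) (f : Hom A B) : Hom (iter m (Si S) A) (iter m (Si S) B) :=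
  match m return Hom (iter m (Si S) A) (iter m (Si S) B) with
  | 0 => f | m'.+1 => Sih S (SinvN m' f) end.

Definition Spow (i : int) (X : C) : C :=
  match i with Posz m => iter m (Sg S) X | Negz m => iter m.+1 (Si S) X end.

Definition Spow_hom (i : int) (A B : C) (f : Hom A B) : Hom (Spow i A) (Spow i B) :=
  match i as j return Hom (Spow j A) (Spow j B) with
  | Posz m => SpowN m f | Negz m => SinvN m.+1 f end.

Lemma Spow_S (i : int) (X : C) : Spow i (Sg S X) = Spow (i + 1) X.
Proof.
case: i => [m|m].
  have -> : (Posz m + 1 = Posz m.+1)%R by rewrite -addn1 PoszD.
  by rewrite /Spow -iterSr.
rewrite {1}/Spow iterSr SiSg; case: m => [|m] //.
have -> : (Negz m.+1 + 1 = Negz m)%R.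
  by rewrite !NegzE -addn1 PoszD opprD addrK.
by [].
Qed.

Variable n : nat.

(* An n-Sigma-sequence A_1 -> A_2 -> ... -> A_n -> Sigma A_1, 0-indexed:
   objects A_{k+1} = sob k for k : 'I_n, and the k-th morphism goes from
   sob k to sob (k+1) if k+1 < n, and from sob (n-1) to Sigma (sob 0)
   otherwise (ordS is the cyclic successor on 'I_n). *)
Definition tgt (ob : 'I_n -> C) (k : 'I_n) : C :=
  if (k.+1 < n)%N then ob (ordS k) else Sg S (ob (ordS k)).

Record nSeq := { sob : 'I_n -> C; smor : forall k : 'I_n, Hom (sob k) (tgt sob k) }.

(* exactness of Hom(B,X) -> Hom(B,Y) -> Hom(B,Z) for all objects B *)
Definition exact_at (X Y Z : C) (f : Hom X Y) (g : Hom Y Z) : Prop :=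
  (forall (B : C) (u : Hom B X), comp g (comp f u) = 0) /\
  (forall (B : C) (v : Hom B Y), comp g v = 0 -> exists u : Hom B X, comp f u = v).

(* the morphism following Sigma^i(alpha_{k+1}) in the doubly infinite sequence *)
Definition nextmap (A : nSeq) (i : int) (k : 'I_n) :
  Hom (Spow i (tgt (sob A) k))
      (Spow (if (k.+1 < n)%N then i else i + 1) (tgt (sob A) (ordS k))) :=
  match (k.+1 < n)%N as b return
    Hom (Spow i (if b then sob A (ordS k) else Sg S (sob A (ordS k))))
        (Spow (if b then i else i + 1) (tgt (sob A) (ordS k))) with
  | true => Spow_hom i (smor A (ordS k))
  | false => castHom (HomT C) (esym (Spow_S i (sob A (ordS k)))) erefl
               (Spow_hom (i + 1) (smor A (ordS k)))
  end.

(* A is exact iff the doubly infinite sequence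
   ... -> Hom(B, Sigma^i A_1) -> ... -> Hom(B, Sigma^i A_n) -> Hom(B, Sigma^{i+1} A_1) -> ...
   is exact for every object B. *)
Definition exact_seq (A : nSeq) : Prop :=
  forall (i : int) (k : 'I_n), exact_at (Spow_hom i (smor A k)) (nextmap A i k).

Definition rot_mor (A : nSeq) (j : 'I_n) :
  Hom (tgt (sob A) j) (tgt (tgt (sob A)) j) :=
  match (j.+1 < n)%N as b return
    Hom (if b then sob A (ordS j) else Sg S (sob A (ordS j)))
        (if b then tgt (sob A) (ordS j) else Sg S (tgt (sob A) (ordS j))) with
  | true => smor A (ordS j)
  | false => Sgh S (smor A (ordS j)) *~ ((-1) ^+ n)
  end.

Definition rot (A : nSeq) : nSeq := {| sob := tgt (sob A); smor := rot_mor A |}.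

Definition phiT (A B : nSeq) (phi : forall k, Hom (sob A k) (sob B k)) (k : 'I_n) :
  Hom (tgt (sob A) k) (tgt (sob B) k) :=
  match (k.+1 < n)%N as b return
    Hom (if b then sob A (ordS k) else Sg S (sob A (ordS k)))
        (if b then sob B (ordS k) else Sg S (sob B (ordS k))) with
  | true => phi (ordS k)
  | false => Sgh S (phi (ordS k))
  end.

Definition is_seqMor (A B : nSeq) (phi : forall k, Hom (sob A k) (sob B k)) : Prop :=
  forall k : 'I_n, comp (phiT phi k) (smor A k) = comp (smor B k) (phi k).

Definition is_iso (X Y : C) (f : Hom X Y) : Prop :=
  exists g : Hom Y X, comp g f = idm X /\ comp f g = idm Y.

(* phi_k and phi_{k+1} isomorphisms for some k (phi_{n+1} = Sigma phi_1) *)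
Definition weak_iso (A B : nSeq) (phi : forall k, Hom (sob A k) (sob B k)) : Prop :=
  exists k : 'I_n, is_iso (phi k) /\ is_iso (phiT phi k).

(* the trivial sequence X --1--> X -> 0 -> ... -> 0 -> Sigma X *)
Definition triv_ob (X : C) (j : 'I_n) : C := if ((j : nat) <= 1)%N then X else zobj.

Lemma triv_e1 (X : C) (k : 'I_n) : ((k : nat) == 0) && (1 < n)%N -> X = triv_ob X k.
Proof. by case/andP => /eqP h _; rewrite /triv_ob h. Qed.

Lemma triv_e2 (X : C) (k : 'I_n) : ((k : nat) == 0) && (1 < n)%N -> X = tgt (triv_ob X) k.
Proof.
case/andP => /eqP h h1; rewrite /tgt /triv_ob h h1 /=.
by rewrite h modn_small.
Qed.

Definition triv_mor (X : C) (k : 'I_n) : Hom (triv_ob X k) (tgt (triv_ob X) k) :=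
  match ((k : nat) == 0) && (1 < n)%N as b
    return (((k : nat) == 0) && (1 < n)%N = b -> Hom (triv_ob X k) (tgt (triv_ob X) k)) with
  | true => fun h => castHom (HomT C) (triv_e1 X h) (triv_e2 X h) (idm X)
  | false => fun _ => 0
  end erefl.

Definition triv (X : C) : nSeq := {| sob := triv_ob X; smor := triv_mor X |}.

Definition N1star (N : nSeq -> Prop) : Prop :=
  [/\ (forall (A B : nSeq) (phi : forall k, Hom (sob A k) (sob B k)),
          exact_seq A -> exact_seq B -> is_seqMor phi -> weak_iso phi -> N A -> N B),
      (forall X : C, N (triv X)) &
      (forall (A1 A2 : C) (alpha : Hom A1 A2), exists A : nSeq, N A /\
          exists (k0 : 'I_n) (e1 : sob A k0 = A1) (e2 : tgt (sob A) k0 = A2),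
            (k0 : nat) = 0 /\ castHom (HomT C) e1 e2 (smor A k0) = alpha)].

Definition N2 (N : nSeq -> Prop) : Prop := forall A : nSeq, N A <-> N (rot A).

Definition N2star (N : nSeq -> Prop) : Prop := forall A : nSeq, N A -> N (rot A).

(* given phi_1, phi_2 (the components at indices 0 and 1 of an arbitrary
   family phi) with phi_2 alpha_1 = beta_1 phi_1, there is a morphism of
   sequences extending them *)
Definition N3 (N : nSeq -> Prop) : Prop :=
  forall A B : nSeq, N A -> N B ->
  forall (k0 : 'I_n), (k0 : nat) = 0 ->
  forall phi : forall k, Hom (sob A k) (sob B k),
    comp (phiT phi k0) (smor A k0) = comp (smor B k0) (phi k0) ->
    exists psi : forall k, Hom (sob A k) (sob B k),
      [/\ is_seqMor psi, psi k0 = phi k0 & psi (ordS k0) = phi (ordS k0)].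

End Seqs.

(* Main.v *)
Require Import Defs.
From mathcomp Require Import all_boot all_order all_algebra.
From Stdlib Require Import ProofIrrelevance FunctionalExtensionality.
Set Implicit Arguments. Unset Strict Implicit. Unset Printing Implicit Defensive.
Import GRing.Theory.
Local Notation Hom := Defs.Hom.
Local Notation rot := Defs.rot.
Local Notation comp := Defs.comp.
Local Open Scope ring_scope.

Section Basic.
Variable (C : AddCat).
Implicit Types (A B D E : C).

Lemma comp0m A B D (f : Hom A B) : comp (0 : Hom B D) f = 0.
Proof.
have h := compDl (0 : Hom B D) 0 f; rewrite addr0 -{1}[comp 0 f]addr0 in h.
exact: esym (addrI _ h).
Qed.
Lemma compm0 A B D (g : Hom B D) : comp g (0 : Hom A B) = 0.
Proof.
have h := compDr g (0 : Hom A B) 0; rewrite addr0 -{1}[comp g 0]addr0 in h.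
exact: esym (addrI _ h).
Qed.
Lemma compNm A B D (g : Hom B D) (f : Hom A B) : comp (- g) f = - comp g f.
Proof. by apply/eqP; rewrite -subr_eq0 opprK -compDl addNr comp0m. Qed.
Lemma compmN A B D (g : Hom B D) (f : Hom A B) : comp g (- f) = - comp g f.
Proof. by apply/eqP; rewrite -subr_eq0 opprK -compDr addNr compm0. Qed.

Lemma sign_cases (m : nat) : ((-1) ^+ m = 1 :> int) \/ ((-1) ^+ m = -1 :> int).
Proof.
elim: m => [|m [h|h]]; rewrite ?expr0; [by left| |].
  by right; rewrite exprS h.
by left; rewrite exprS h.
Qed.

Lemma compzm A B D (g : Hom B D) (f : Hom A B) m :
  comp (g *~ ((-1) ^+ m)) f = comp g f *~ ((-1) ^+ m).
Proof. by case: (sign_cases m) => ->; rewrite ?mulr1z ?mulrN1z ?compNm. Qed.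
Lemma compmz A B D (g : Hom B D) (f : Hom A B) m :
  comp g (f *~ ((-1) ^+ m)) = comp g f *~ ((-1) ^+ m).
Proof. by case: (sign_cases m) => ->; rewrite ?mulr1z ?mulrN1z ?compmN. Qed.
Lemma signK A B (f g : Hom A B) m : f *~ ((-1) ^+ m) = g *~ ((-1) ^+ m) -> f = g.
Proof. by case: (sign_cases m) => ->; rewrite ?mulr1z ?mulrN1z //; apply: oppr_inj. Qed.

Definition cst (A A' B B' : C) (e1 : A = A') (e2 : B = B') (f : Hom A B) : Hom A' B' :=
  castHom (HomT C) e1 e2 f.

Lemma castHom_id A B (e1 : A = A) (e2 : B = B) (f : Hom A B) : castHom (HomT C) e1 e2 f = f.
Proof. by rewrite (proof_irrelevance _ e1 erefl) (proof_irrelevance _ e2 erefl). Qed.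

Lemma castHom_pi A A' B B' (e1 e1' : A = A') (e2 e2' : B = B') (f : Hom A B) :
  castHom (HomT C) e1 e2 f = castHom (HomT C) e1' e2' f.
Proof. by rewrite (proof_irrelevance _ e1 e1') (proof_irrelevance _ e2 e2'). Qed.

Lemma castHom_comp A A' A'' B B' B'' (e1 : A = A') (e2 : B = B') (e3 : A' = A'') (e4 : B' = B'')
  (f : Hom A B) :
  castHom (HomT C) e3 e4 (castHom (HomT C) e1 e2 f) = castHom (HomT C) (etrans e1 e3) (etrans e2 e4) f.
Proof. by case: A'' / e3; case: B'' / e4; case: A' / e1; case: B' / e2. Qed.

Lemma castHom_sym A A' B B' (e1 : A = A') (e2 : B = B') (f : Hom A B) g :
  castHom (HomT C) e1 e2 f = g -> f = castHom (HomT C) (esym e1) (esym e2) g.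
Proof. by case: A' / e1 g; case: B' / e2 => g <-. Qed.

Lemma castHom_cmp A A' B B' D D' (e1 : A = A') (e2 : B = B') (e3 : D = D')
  (g : Hom B D) (f : Hom A B) :
  castHom (HomT C) e1 e3 (comp g f) = comp (castHom (HomT C) e2 e3 g) (castHom (HomT C) e1 e2 f).
Proof. by case: A' / e1; case: B' / e2; case: D' / e3. Qed.

Lemma castHom0 A A' B B' (e1 : A = A') (e2 : B = B') : castHom (HomT C) e1 e2 (0 : Hom A B) = 0.
Proof. by case: A' / e1; case: B' / e2. Qed.

Lemma castHomz A A' B B' (e1 : A = A') (e2 : B = B') (f : Hom A B) m :
  castHom (HomT C) e1 e2 (f *~ m) = castHom (HomT C) e1 e2 f *~ m.
Proof. by case: A' / e1; case: B' / e2. Qed.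

Definition is_exact A B D (f : Hom A B) (g : Hom B D) := exact_at f g.

Lemma exact_castHom A A' B B' D D' (e1 : A = A') (e2 : B = B') (e3 : D = D')
  (f : Hom A B) (g : Hom B D) :
  exact_at f g -> exact_at (castHom (HomT C) e1 e2 f) (castHom (HomT C) e2 e3 g).
Proof. by case: A' / e1; case: B' / e2; case: D' / e3. Qed.

Lemma exact_signr A B D (f : Hom A B) (g : Hom B D) m :
  exact_at f g -> exact_at f (g *~ ((-1) ^+ m)).
Proof.
case: (sign_cases m) => ->; rewrite ?mulr1z ?mulrN1z // => -[h1 h2]; split.
  by move=> B0 u; rewrite compNm h1 oppr0.
by move=> B0 v; rewrite compNm => /eqP; rewrite oppr_eq0 => /eqP /h2.
Qed.
Lemma exact_signl A B D (f : Hom A B) (g : Hom B D) m :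
  exact_at f g -> exact_at (f *~ ((-1) ^+ m)) g.
Proof.
case: (sign_cases m) => ->; rewrite ?mulr1z ?mulrN1z // => -[h1 h2]; split.
  by move=> B0 u; rewrite compNm compmN h1 oppr0.
move=> B0 v /h2 [u hu]; exists (- u); by rewrite compNm compmN opprK.
Qed.
Lemma exact_sign A B D (f : Hom A B) (g : Hom B D) m m' :
  exact_at (f *~ ((-1) ^+ m)) (g *~ ((-1) ^+ m')) -> exact_at f g.
Proof.
move=> h; have := exact_signl m (exact_signr m' h).
have sq : forall k, ((-1) ^+ k * (-1) ^+ k = 1 :> int).
  by move=> k; case: (sign_cases k) => ->.
by rewrite -!mulrzA !sq !mulr1z.
Qed.
End Basic.

Section Aut.
Variables (C : AddCat) (S : Autom C).
Implicit Types (A B D E : C).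

Lemma Sgh0 A B : Sgh S (0 : Hom A B) = 0.
Proof.
have h := Sgh_add S (0 : Hom A B) 0; rewrite addr0 -{1}[Sgh S 0]addr0 in h.
exact: esym (addrI _ h).
Qed.
Lemma Sih0 A B : Sih S (0 : Hom A B) = 0.
Proof.
have h := Sih_add S (0 : Hom A B) 0; rewrite addr0 -{1}[Sih S 0]addr0 in h.
exact: esym (addrI _ h).
Qed.
Lemma SghN A B (f : Hom A B) : Sgh S (- f) = - Sgh S f.
Proof. by apply/eqP; rewrite -subr_eq0 opprK -Sgh_add addNr Sgh0. Qed.
Lemma Sghz A B (f : Hom A B) m : Sgh S (f *~ ((-1) ^+ m)) = Sgh S f *~ ((-1) ^+ m).
Proof. by case: (sign_cases m) => ->; rewrite ?mulr1z ?mulrN1z ?SghN. Qed.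

Lemma Sgh_cast A A' B B' (e1 : A = A') (e2 : B = B') (e1' : Sg S A = Sg S A') (e2' : Sg S B = Sg S B') (f : Hom A B) :
  Sgh S (castHom (HomT C) e1 e2 f) = castHom (HomT C) e1' e2' (Sgh S f).
Proof. by move: e1' e2'; case: A' / e1; case: B' / e2 => e1' e2'; rewrite [RHS]castHom_id. Qed.
Lemma Sih_cast A A' B B' (e1 : A = A') (e2 : B = B') (e1' : Si S A = Si S A') (e2' : Si S B = Si S B') (f : Hom A B) :
  Sih S (castHom (HomT C) e1 e2 f) = castHom (HomT C) e1' e2' (Sih S f).
Proof. by move: e1' e2'; case: A' / e1; case: B' / e2 => e1' e2'; rewrite [RHS]castHom_id. Qed.

Lemma Sgh_inj A B (f g : Hom A B) : Sgh S f = Sgh S g -> f = g.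
Proof. by move=> h; rewrite -(SihSgh S f) -(SihSgh S g) h. Qed.

Definition desusp A B (g : Hom (Sg S A) (Sg S B)) : Hom A B :=
  castHom (HomT C) (SiSg S A) (SiSg S B) (Sih S g).

Lemma Sgh_desusp A B (g : Hom (Sg S A) (Sg S B)) : Sgh S (desusp g) = g.
Proof.
rewrite /desusp (Sgh_cast _ _ (SgSi S (Sg S A)) (SgSi S (Sg S B))).
exact: SghSih.
Qed.

Lemma desusp_comp A B D (g : Hom (Sg S B) (Sg S D)) (f : Hom (Sg S A) (Sg S B)) :
  desusp (comp g f) = comp (desusp g) (desusp f).
Proof. by rewrite /desusp Sih_comp (castHom_cmp _ (SiSg S B)). Qed.

Lemma desusp_id A : desusp (idm (Sg S A)) = idm A.
Proof. apply: Sgh_inj; by rewrite Sgh_desusp Sgh_id. Qed.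

Lemma iso_Sgh_refl A B (f : Hom A B) : is_iso (Sgh S f) -> is_iso f.
Proof.
case=> g [h1 h2]; exists (desusp g); split; apply: Sgh_inj.
  by rewrite Sgh_comp Sgh_desusp h1 Sgh_id.
by rewrite Sgh_comp Sgh_desusp h2 Sgh_id.
Qed.

Lemma iso_Sgh A B (f : Hom A B) : is_iso f -> is_iso (Sgh S f).
Proof.
case=> g [h1 h2]; exists (Sgh S g); by rewrite -!Sgh_comp h1 h2 !Sgh_id.
Qed.

Lemma exact_Sgh A B D (f : Hom A B) (g : Hom B D) :
  exact_at f g -> exact_at (Sgh S f) (Sgh S g).
Proof.
case=> h1 h2; split.
  move=> B0 u; rewrite Defs.compA -Sgh_comp.
  have -> : comp g f = 0 by rewrite -[f]compm1 h1.
  by rewrite Sgh0 comp0m.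
move=> B0 v hv.
pose v' := castHom (HomT C) erefl (SiSg S B) (Sih S v).
have hv' : comp g v' = 0.
  rewrite -(SihSgh S g) /v' -castHom_cmp -Sih_comp hv Sih0.
  exact: castHom0.
case: (h2 _ v' hv') => u' hu'.
exists (castHom (HomT C) (SgSi S B0) erefl (Sgh S u')).
rewrite -[Sgh S f](castHom_id erefl erefl) -castHom_cmp -Sgh_comp hu' /v'.
rewrite (Sgh_cast _ _ erefl (SgSi S (Sg S B))) castHom_comp.
rewrite -[RHS](SghSih S v); exact: castHom_pi.
Qed.

Definition flipA : Autom C :=
  {| Sg := Si S; Sgh := @Sih C S; Sgh_id := @Sih_id C S; Sgh_comp := @Sih_comp C S;
     Sgh_add := @Sih_add C S; Si := Sg S; Sih := @Sgh C S; Sih_id := @Sgh_id C S;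
     Sih_comp := @Sgh_comp C S; Sih_add := @Sgh_add C S; SiSg := @SgSi C S; SgSi := @SiSg C S;
     SihSgh := @SghSih C S; SghSih := @SihSgh C S |}.

End Aut.

Lemma exact_Sih (C : AddCat) (S : Autom C) (A B D : C) (f : Hom A B) (g : Hom B D) :
  exact_at f g -> exact_at (Sih S f) (Sih S g).
Proof. exact: (@exact_Sgh C (flipA S)). Qed.

Lemma exact_Sgh_refl (C : AddCat) (S : Autom C) (A B D : C) (f : Hom A B) (g : Hom B D) :
  exact_at (Sgh S f) (Sgh S g) -> exact_at f g.
Proof.
move=> /exact_Sih /(exact_castHom (SiSg S A) (SiSg S B) (SiSg S D)).
by rewrite !SihSgh.
Qed.

Section Pow.
Variables (C : AddCat) (S : Autom C).
Implicit Types (A B D E : C).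

Lemma Spow_hom_cast i A A' B B' (e1 : A = A') (e2 : B = B') e1' e2' (f : Hom A B) :
  Spow_hom S i (castHom (HomT C) e1 e2 f) = castHom (HomT C) e1' e2' (Spow_hom S i f).
Proof. by move: e1' e2'; case: A' / e1; case: B' / e2 => e1' e2'; rewrite [RHS]castHom_id. Qed.

Lemma SinvN_claim (p : nat) A B (a : Hom A B) e1 e2 :
  SinvN S p a = castHom (HomT C) e1 e2 (SinvN S p.+1 (Sgh S a)).
Proof.
elim: p e1 e2 => [|p IH] e1 e2.
  by rewrite /= -[LHS](SihSgh S a); apply: castHom_pi.
have e1' : iter p.+1 (Si S) (Sg S A) = iter p (Si S) A by rewrite iterSr SiSg.
have e2' : iter p.+1 (Si S) (Sg S B) = iter p (Si S) B by rewrite iterSr SiSg.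
transitivity (Sih S (SinvN S p a)); first by [].
rewrite (IH e1' e2') (Sih_cast _ _ e1 e2); done.
Qed.

Lemma SpowN_claim (m : nat) A B (a : Hom A B) e1 e2 :
  SpowN S m.+1 a = castHom (HomT C) e1 e2 (SpowN S m (Sgh S a)).
Proof.
elim: m e1 e2 => [|m IH] e1 e2.
  by rewrite /= castHom_id.
have e1' : iter m (Sg S) (Sg S A) = iter m.+1 (Sg S) A by rewrite iterSr.
have e2' : iter m (Sg S) (Sg S B) = iter m.+1 (Sg S) B by rewrite iterSr.
transitivity (Sgh S (SpowN S m.+1 a)); first by [].
by rewrite (IH e1' e2') (Sgh_cast _ _ e1 e2).
Qed.


Lemma Spow_hom_S (i j : int) (hj : j = i + 1) A B (a : Hom A B)
  (e1 : Spow S i (Sg S A) = Spow S j A) (e2 : Spow S i (Sg S B) = Spow S j B) :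
  Spow_hom S j a = castHom (HomT C) e1 e2 (Spow_hom S i (Sgh S a)).
Proof.
case: i hj e1 e2 => [m|m] hj.
  have hj' : j = Posz m.+1 by rewrite hj -addn1 PoszD.
  clear hj; subst j => e1 e2; exact (SpowN_claim a e1 e2).
case: m hj => [|m] hj.
  have hj' : j = Posz 0 by rewrite hj.
  clear hj; subst j => e1 e2; exact (SinvN_claim (p:=0) a e1 e2).
have hj' : j = Negz m by rewrite hj !NegzE -addn1 PoszD opprD addrK.
clear hj; subst j => e1 e2; exact (SinvN_claim (p:=m.+1) a e1 e2).
Qed.

Lemma exact_Spow i A B D (f : Hom A B) (g : Hom B D) :
  exact_at f g -> exact_at (Spow_hom S i f) (Spow_hom S i g).
Proof.
move=> h; case: i => [m|m] /=.
  by elim: m => [|m IH] //=; apply: exact_Sgh.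
elim: m => [|m IH] /=; first exact: exact_Sih.
exact: exact_Sih.
Qed.
End Pow.

Section Seq.
Variables (C : AddCat) (S : Autom C) (n : nat).
Local Notation nSeq := (nSeq S n).
Local Notation tgt := (tgt S).

Definition E0 (A : nSeq) (k : 'I_n) := exact_at (smor A k) (nextmap A 0 k).

Lemma nextmap_shift (A : nSeq) (i : int) (k : 'I_n) :
  exists E : Spow S i (Spow S (if (k.+1 < n)%N then 0 else 0 + 1) (tgt (sob A) (ordS k)))
           = Spow S (if (k.+1 < n)%N then i else i + 1) (tgt (sob A) (ordS k)),
    nextmap A i k = castHom (HomT C) erefl E (Spow_hom S i (nextmap A 0 k)).
Proof.
rewrite /nextmap /Defs.tgt; move: (smor A (ordS k)); case: (k.+1 < n)%N => a.
  by exists erefl.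
exists (Spow_S S i _).
have h0 : castHom (HomT C) (esym (Spow_S S 0 (sob A (ordS k)))) erefl (Spow_hom S (0 + 1) a)
  = castHom (HomT C) erefl (Spow_S S 0 _) (Sgh S a).
  rewrite (Spow_hom_S (j := 0 + 1) erefl a (Spow_S S 0 _) (Spow_S S 0 _)) castHom_comp.
  exact: castHom_pi.
rewrite h0 (@Spow_hom_cast C S i _ _ _ _ erefl (Spow_S S 0 _) erefl (congr1 (Spow S i) (Spow_S S 0 _)) (Sgh S a)).
rewrite (Spow_hom_S (j := i + 1) erefl a (Spow_S S i _) (Spow_S S i _)).
rewrite !castHom_comp.
exact: castHom_pi.
Qed.

Lemma exact_seq_E0 (A : nSeq) : (forall k, E0 A k) -> exact_seq A.
Proof.
move=> h i k; have [E ->] := nextmap_shift A i k.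
rewrite -[Spow_hom S i (smor A k)](castHom_id erefl erefl).
apply: exact_castHom; apply: exact_Spow; exact: h.
Qed.

End Seq.

Lemma exact_unsignr (C : AddCat) (A B D : C) (f : Hom A B) (g : Hom B D) m :
  exact_at f (g *~ ((-1) ^+ m)) -> exact_at f g.
Proof.
move=> /(exact_signr m); rewrite -mulrzA.
by case: (sign_cases m) => ->; rewrite mulr1z.
Qed.
Lemma exact_unsignl (C : AddCat) (A B D : C) (f : Hom A B) (g : Hom B D) m :
  exact_at (f *~ ((-1) ^+ m)) g -> exact_at f g.
Proof.
move=> /(exact_signl m); rewrite -mulrzA.
by case: (sign_cases m) => ->; rewrite mulr1z.
Qed.

Section Seq2.
Variables (C : AddCat) (S : Autom C) (n : nat).
Local Notation nSeq := (nSeq S n).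
Local Notation tgt := (tgt S).
Local Notation E0 := (@E0 C S n).

Lemma Spow_hom01 (X Y : C) (a : Hom X Y) :
  castHom (HomT C) (esym (Spow_S S 0 X)) erefl (Spow_hom S (0 + 1) a) = Sgh S a.
Proof.
rewrite (Spow_hom_S (j := 0 + 1) erefl a (Spow_S S 0 _) (Spow_S S 0 _)) castHom_comp.
exact: castHom_id.
Qed.

Lemma RN (A : nSeq) (j : 'I_n) (X : C) (f : Hom X (tgt (sob A) j)) :
  exact_at f (rot_mor A j) -> exact_at f (nextmap A 0 j).
Proof.
move: f; rewrite /rot_mor /nextmap; move: (smor A (ordS j)); rewrite /Defs.tgt.
case: (j.+1 < n)%N => f a //.
by rewrite Spow_hom01 => /exact_unsignr.
Qed.

Lemma E0_rot (A : nSeq) (k : 'I_n) : E0 (rot A) k -> E0 A (ordS k).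
Proof.
move=> H; apply: RN; move: H; rewrite /E0 /=.
change (exact_at (rot_mor A k) (nextmap (rot A) 0 k) ->
  exact_at (smor A (ordS k)) (smor (rot A) (ordS k))).
rewrite /nextmap /rot_mor /=.
move: (smor A (ordS k)) (smor (rot A) (ordS k)); rewrite /= /Defs.tgt.
case: (k.+1 < n)%N => a b //.
by rewrite Spow_hom01 => /exact_unsignl /exact_Sgh_refl.
Qed.
End Seq2.

Section Unrot.
Variables (C : AddCat) (S : Autom C) (n : nat).
Local Notation nSeq := (nSeq S n).
Local Notation tgt := (tgt S).

Definition untgt (C1 D1 : nSeq) (p : 'I_n) (f : Hom (tgt (sob C1) p) (tgt (sob D1) p)) :
  Hom (sob C1 (ordS p)) (sob D1 (ordS p)) :=
  match (p.+1 < n)%N as b return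
    Hom (if b then sob C1 (ordS p) else Sg S (sob C1 (ordS p)))
        (if b then sob D1 (ordS p) else Sg S (sob D1 (ordS p))) ->
    Hom (sob C1 (ordS p)) (sob D1 (ordS p)) with
  | true => fun f => f
  | false => fun f => desusp f
  end f.

Definition unphiT (C1 D1 : nSeq) (P : forall k, Hom (sob (rot C1) k) (sob (rot D1) k)) :
  forall k, Hom (sob C1 k) (sob D1 k) :=
  fun k => castHom (HomT C) (congr1 (sob C1) (ord_predK k)) (congr1 (sob D1) (ord_predK k))
                   (untgt (P (ord_pred k))).

Lemma unphiT_S (C1 D1 : nSeq) P p : @unphiT C1 D1 P (ordS p) = untgt (P p).
Proof.
rewrite /unphiT.
move: (ord_pred (ordS p)) (ordSK p) (ord_predK (ordS p)) => q e; case: p / e => e'.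
exact: castHom_id.
Qed.

Lemma phiT_unphiT (C1 D1 : nSeq) P p : phiT (@unphiT C1 D1 P) p = P p.
Proof.
rewrite /phiT !unphiT_S /untgt; move: (P p); rewrite /= /Defs.tgt.
case: (p.+1 < n)%N => f //=.
exact: Sgh_desusp.
Qed.

Lemma unrot_mor (C1 D1 : nSeq) (phi : forall k, Hom (sob C1 k) (sob D1 k)) :
  is_seqMor (A := rot C1) (B := rot D1) (phiT phi) -> is_seqMor phi.
Proof.
move=> H k; rewrite -(ord_predK k); have := H (ord_pred k).
move: (ord_pred k) => p.
rewrite [phiT (A:=rot C1) (B:=rot D1) (phiT phi) p]/phiT [phiT phi p]/phiT /= [rot_mor C1 p]/rot_mor [rot_mor D1 p]/rot_mor.
move: (phiT phi (ordS p)) (smor C1 (ordS p)) (smor D1 (ordS p)) (phi (ordS p)).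
rewrite /Defs.tgt; case: (p.+1 < n)%N => x a d y //=.
rewrite compmz compzm -!Sgh_comp => /signK; exact: Sgh_inj.
Qed.

Lemma unrot_weak (C1 D1 : nSeq) (phi : forall k, Hom (sob C1 k) (sob D1 k)) :
  weak_iso (A := rot C1) (B := rot D1) (phiT phi) -> weak_iso phi.
Proof.
case=> p H; exists (ordS p); move: H.
rewrite [phiT (A:=rot C1) (B:=rot D1) (phiT phi) p]/phiT [phiT phi p]/phiT /=.
move: (phiT phi (ordS p)) (phi (ordS p)).
rewrite /Defs.tgt; case: (p.+1 < n)%N => x y //=.
by case=> /iso_Sgh_refl h1 /iso_Sgh_refl h2.
Qed.

Lemma unrot (C1 D1 : nSeq) (P : forall k, Hom (sob (rot C1) k) (sob (rot D1) k)) :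
  is_seqMor P -> weak_iso P -> exists phi : forall k, Hom (sob C1 k) (sob D1 k),
    is_seqMor phi /\ weak_iso phi.
Proof.
have E : P = phiT (unphiT P).
  apply: functional_extensionality_dep => k; by rewrite phiT_unphiT.
rewrite E => h1 h2; exists (unphiT P); split.
  exact: unrot_mor.
exact: unrot_weak.
Qed.

Lemma unrot_iter (m : nat) (C1 D1 : nSeq) (P : forall k, Hom (sob (iter m (@Defs.rot C S n) C1) k) (sob (iter m (@Defs.rot C S n) D1) k)) :
  is_seqMor P -> weak_iso P -> exists phi : forall k, Hom (sob C1 k) (sob D1 k),
    is_seqMor phi /\ weak_iso phi.
Proof.
elim: m P => [|m IH] P; first by move=> h1 h2; exists P.
move=> h1 h2; have [phi [h3 h4]] := unrot h1 h2.
exact: IH h3 h4.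
Qed.

Definition Agree (C1 D1 : nSeq) (j : 'I_n) :=
  exists (e1 : sob C1 j = sob D1 j) (e2 : tgt (sob C1) j = tgt (sob D1) j),
    castHom (HomT C) e1 e2 (smor C1 j) = smor D1 j.

Lemma Agree_rot (C1 D1 : nSeq) j : Agree C1 D1 (ordS j) -> Agree (rot C1) (rot D1) j.
Proof.
case=> e1 [e2 h]; rewrite /Agree /= /rot_mor.
move: (smor C1 (ordS j)) (smor D1 (ordS j)) h; rewrite /Defs.tgt.
case: (j.+1 < n)%N => a d h.
  by exists e1, e2.
exists (congr1 (Sg S) e1), (congr1 (Sg S) e2).
by rewrite castHomz -(Sgh_cast e1 e2) h.
Qed.

Lemma Agree_iter (m : nat) (C1 D1 : nSeq) j :
  Agree C1 D1 (iter m (@ordS n) j) -> Agree (iter m (@Defs.rot C S n) C1) (iter m (@Defs.rot C S n) D1) j.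
Proof.
elim: m j => [|m IH] j //= h.
apply: Agree_rot; apply: IH; by rewrite -iterSr.
Qed.

End Unrot.

Section Fam.
Variables (C : AddCat) (S : Autom C) (n : nat).
Local Notation nSeq := (nSeq S n).
Local Notation tgt := (tgt S).

Definition fam2 (C1 D1 : nSeq) (k0 : 'I_n) (f0 : Hom (sob C1 k0) (sob D1 k0))
  (f1 : Hom (sob C1 (ordS k0)) (sob D1 (ordS k0))) : forall k, Hom (sob C1 k) (sob D1 k) :=
  fun k => match k0 =P k with
  | ReflectT e => castHom (HomT C) (congr1 (sob C1) e) (congr1 (sob D1) e) f0
  | ReflectF _ => match ordS k0 =P k with
     | ReflectT e => castHom (HomT C) (congr1 (sob C1) e) (congr1 (sob D1) e) f1
     | ReflectF _ => 0 end end.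

Lemma fam2_0 C1 D1 k0 f0 f1 : @fam2 C1 D1 k0 f0 f1 k0 = f0.
Proof. rewrite /fam2; case: eqP => // e; exact: castHom_id. Qed.

Lemma fam2_1 C1 D1 k0 f0 f1 : k0 != ordS k0 -> @fam2 C1 D1 k0 f0 f1 (ordS k0) = f1.
Proof.
move=> /negP h; rewrite /fam2; case: eqP => [e|_]; first by case: h; apply/eqP.
case: eqP => // e; exact: castHom_id.
Qed.

Lemma phiT_untgt (C1 D1 : nSeq) (phi : forall k, Hom (sob C1 k) (sob D1 k)) p f :
  phi (ordS p) = untgt f -> phiT phi p = f.
Proof.
rewrite /phiT => ->; rewrite /untgt; move: f; rewrite /= /Defs.tgt.
case: (p.+1 < n)%N => f //=.
exact: Sgh_desusp.
Qed.

Lemma unphiT_mor (C1 D1 : nSeq) (P : forall k, Hom (sob (rot C1) k) (sob (rot D1) k)) :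
  is_seqMor P -> is_seqMor (unphiT P).
Proof.
have E : P = phiT (unphiT P).
  apply: functional_extensionality_dep => k; by rewrite phiT_unphiT.
rewrite {1}E; exact: unrot_mor.
Qed.

Lemma untgt_lt (C1 D1 : nSeq) (p : 'I_n) (f : Hom (tgt (sob C1) p) (tgt (sob D1) p)) :
  (p.+1 < n)%N -> exists e1 e2, untgt f = castHom (HomT C) e1 e2 f.
Proof.
rewrite /untgt; move: f; rewrite /Defs.tgt; case: (p.+1 < n)%N => f // _.
by exists erefl, erefl.
Qed.

Lemma untgt0 (C1 D1 : nSeq) p : untgt (0 : Hom (tgt (sob C1) p) (tgt (sob D1) p)) = 0.
Proof.
rewrite /untgt /Defs.tgt; case: (p.+1 < n)%N => //.
by rewrite /desusp Sih0 castHom0.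
Qed.

Lemma rot_mor_lt (A : nSeq) (j : 'I_n) : (j.+1 < n)%N ->
  exists e1 e2, rot_mor A j = castHom (HomT C) e1 e2 (smor A (ordS j)).
Proof.
rewrite /rot_mor; move: (smor A (ordS j)); rewrite /Defs.tgt; case: (j.+1 < n)%N => f // _.
by exists erefl, erefl.
Qed.

End Fam.

Lemma castHom_compl (C : AddCat) (A B B' D D' : C) (e1 : B = B') (e2 : D = D') (g : Hom B D) (f : Hom A B') :
  comp (castHom (HomT C) e1 e2 g) f = castHom (HomT C) erefl e2 (comp g (castHom (HomT C) erefl (esym e1) f)).
Proof. by case: B' / e1 f; case: D' / e2. Qed.
Lemma castHom_compr (C : AddCat) (A A' B B' D : C) (e1 : A = A') (e2 : B = B') (g : Hom B' D) (f : Hom A B) :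
  comp g (castHom (HomT C) e1 e2 f) = castHom (HomT C) e1 erefl (comp (castHom (HomT C) (esym e2) erefl g) f).
Proof. by case: A' / e1; case: B' / e2 g. Qed.
Lemma castHom_eq0 (C : AddCat) (A A' B B' : C) (e1 : A = A') (e2 : B = B') (f : Hom A B) :
  castHom (HomT C) e1 e2 f = 0 -> f = 0.
Proof. by case: A' / e1; case: B' / e2. Qed.

Section Ex.
Variables (C : AddCat) (S : Autom C) (n' : nat).
Local Notation n := n'.+3.
Local Notation nSeq := (nSeq S n).
Local Notation tgt := (tgt S).

Definition k0 : 'I_n := Ordinal (ltn0Sn n'.+2).

Lemma k0_ne : k0 != ordS k0.
Proof. by []. Qed.

Lemma triv_mor_k0 (Y : C) : triv_mor S Y k0 = idm Y.
Proof. rewrite /triv_mor /=. exact: castHom_id. Qed.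

Lemma triv_mor_k1 (Y : C) : triv_mor S Y (ordS k0) = 0.
Proof. by []. Qed.

Variable N : nSeq -> Prop.
Hypotheses (HN1 : N1star N) (HN2 : N2star N) (HN3 : N3 N).

Lemma E0_k0 (X : nSeq) : N X -> E0 X k0.
Proof.
move=> HX; have [N1a N1b N1c] := HN1.
apply: RN; split.
  move=> B u.
  suff h : comp (rot_mor X k0) (smor X k0) = 0 by rewrite Defs.compA h comp0m.
  pose Y := sob X k0.
  pose f1' : Hom (tgt (triv_ob Y) k0) (tgt (sob X) k0) := smor X k0.
  pose phi := fam2 (C1 := triv S n Y) (D1 := X) (k0 := k0) (idm Y) (untgt (C1 := triv S n Y) (D1 := X) (p := k0) f1').
  have sq : comp (phiT phi k0) (smor (triv S n Y) k0) = comp (smor X k0) (phi k0).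
    rewrite (@phiT_untgt C S n (triv S n Y) X phi k0 f1'); last by rewrite /phi fam2_1.
    rewrite /phi fam2_0 /= triv_mor_k0 !compm1 //.
  have [psi [hpsi hpsi0 hpsi1]] := HN3 (N1b Y) HX (erefl : (k0 : nat) = 0) sq.
  have := hpsi (ordS k0); rewrite /= triv_mor_k1 compm0 hpsi1 /phi fam2_1 //.
move=> B v hv.
pose phi := fam2 (C1 := rot (triv S n B)) (D1 := rot X) (k0 := k0) v (untgt (C1 := rot (triv S n B)) (D1 := rot X) (p := k0) 0).
have sq : comp (phiT phi k0) (smor (rot (triv S n B)) k0) = comp (smor (rot X) k0) (phi k0).
  rewrite (@phiT_untgt C S n (rot (triv S n B)) (rot X) phi k0 0); last by rewrite /phi fam2_1.
  by rewrite comp0m /phi fam2_0 /= hv.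
have [psi [hpsi hpsi0 hpsi1]] := HN3 (HN2 (N1b B)) (HN2 HX) (erefl : (k0 : nat) = 0) sq.
have := unphiT_mor hpsi k0.
rewrite phiT_unphiT hpsi0 /phi fam2_0 /= triv_mor_k0 compm1 => h.
by exists (unphiT psi k0).
Qed.

End Ex.

Lemma iter_ordS_val (n : nat) (m : nat) (j : 'I_n) : (iter m (@ordS n) j : nat) = ((j + m) %% n)%N.
Proof.
elim: m => [|m IH] /=; first by rewrite addn0 modn_small.
by rewrite IH -addn1 modnDml -addnA addn1 addnS.
Qed.

Lemma iter_ordS_n (n : nat) (j : 'I_n) : iter n (@ordS n) j = j.
Proof. by apply: val_inj; rewrite /= iter_ordS_val modnDr modn_small. Qed.

Lemma iso_castid (C : AddCat) (A B B' : C) (e1 : A = B) (e2 : A = B') :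
  is_iso (castHom (HomT C) e1 e2 (idm A)).
Proof. case: B / e1; case: B' / e2; by exists (idm A); rewrite comp1m. Qed.

Section Main.
Variables (C : AddCat) (S : Autom C) (n' : nat).
Local Notation n := n'.+3.
Local Notation nSeq := (nSeq S n).
Local Notation tgt := (tgt S).
Variable N : nSeq -> Prop.
Hypotheses (HN1 : N1star N) (HN2 : N2star N) (HN3 : N3 N).

Lemma N_iter m (X : nSeq) : N X -> N (iter m (@Defs.rot C S n) X).
Proof. by elim: m => [|m IH] //= h; apply: HN2; apply: IH. Qed.

Lemma E0_all (X : nSeq) k : N X -> E0 X k.
Proof.
have -> : k = iter k (@ordS n) (k0 n').
  apply: val_inj; rewrite /= iter_ordS_val /=. by rewrite add0n modn_small.
elim: (k : nat) X => [|m IH] X HX /=; first exact: (E0_k0 HN1 HN2 HN3).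
apply: E0_rot; apply: IH; exact: HN2.
Qed.

Lemma Ex (X : nSeq) : N X -> exact_seq X.
Proof. move=> HX; apply: exact_seq_E0 => k; exact: E0_all. Qed.

Lemma exact_unrot (A : nSeq) : exact_seq (rot A) -> exact_seq A.
Proof.
move=> h; apply: exact_seq_E0 => k; rewrite -(ord_predK k); apply: E0_rot.
exact: (h 0 (ord_pred k)).
Qed.

Lemma main_rot (A : nSeq) : N (rot A) -> N A.
Proof.
move=> HA; have [N1a N1b N1c] := HN1.
have exA : exact_seq A by apply: exact_unrot; exact: Ex.
have [B [HB [k0' [e1 [e2 [hk h]]]]]] := N1c _ _ (smor A (k0 n')).
have hk0 : k0' = (k0 n') by apply: val_inj.
subst k0'.
have ag : Agree B A (iter n (@ordS n) (k0 n')) by rewrite iter_ordS_n; exists e1, e2.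
have [f1 [f2 hh]] := Agree_iter ag.
set C1 := iter n _ B in f1 f2 hh *; set D1 := iter n _ A in f1 f2 hh *.
have HC1 : N C1 by apply: N_iter.
have HD1 : N D1 by rewrite /D1 iterSr; apply: N_iter.
pose g0 : Hom (sob C1 (k0 n')) (sob D1 (k0 n')) := castHom (HomT C) erefl f1 (idm _).
pose g1 : Hom (tgt (sob C1) (k0 n')) (tgt (sob D1) (k0 n')) := castHom (HomT C) erefl f2 (idm _).
pose phi := fam2 (C1 := C1) (D1 := D1) (k0 := k0 n') g0 (untgt (C1 := C1) (D1 := D1) (p := (k0 n')) g1).
have pT : forall psi : forall k, Hom (sob C1 k) (sob D1 k),
    psi (ordS (k0 n')) = phi (ordS (k0 n')) -> phiT psi (k0 n') = g1.
  move=> psi hpsi; apply: (@phiT_untgt C S n C1 D1 psi (k0 n') g1).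
  by rewrite hpsi /phi fam2_1.
have sq : comp (phiT phi (k0 n')) (smor C1 (k0 n')) = comp (smor D1 (k0 n')) (phi (k0 n')).
  rewrite pT // /phi fam2_0 /g0 /g1 -hh !castHom_compl castHom_comp !castHom_id.
  by rewrite comp1m compm1.
have [psi [hpsi hpsi0 hpsi1]] := HN3 HC1 HD1 (erefl : (k0 n' : nat) = 0) sq.
have wpsi : weak_iso psi.
  exists (k0 n'); rewrite pT // hpsi0 /phi fam2_0; split; exact: iso_castid.
have [phi' [hphi wphi]] := unrot_iter hpsi wpsi.
exact: N1a _ _ phi' (Ex HB) exA hphi wphi HB.
Qed.

End Main.

Local Close Scope ring_scope.
Theorem theorem3p3 (C : AddCat) (S : Autom C) (n : nat) (N : nSeq S n -> Prop) :
  3 <= n -> N1star N -> N3 N -> (N2 N <-> N2star N).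
Proof.
case: n N => [|[|[|n']]] N // _ HN1 HN3; split.
  by move=> h A /h.
move=> HN2 A; split; first exact: HN2.
exact: main_rot.
Qed.
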